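(* Let $\pi_2$ be the five-dimensional complex associative algebra with basis $e_1,\dots,e_5$ and nonzero products $e_1e_1=e_2$, $e_1e_2=e_2e_1=e_3$, $e_1e_4=e_4e_1=e_5$, $e_4e_4=e_5$ (all other products of basis elements are zero). A linear operator on $\pi_2$ is a local automorphism if and only if its matrix has the form $$\begin{pmatrix} b_{11} & 0 & 0 & 0 & 0 \\ b_{21} & b_{22} & 0 & 0 & 0 \\ b_{31} & b_{32} & b_{33} & b_{34} & 0 \\ b_{41} & 0 & 0 & b_{41}+b_{11} & 0 \\ b_{51} & b_{52} & 0 & b_{54} & b_{22}+b_{52} \end{pmatrix},$$ where $b_{11},b_{21},b_{22},b_{31},b_{32},b_{33},b_{34},b_{41},b_{51},b_{52},b_{54}\in\mathbb{C}$ satisfy $b_{11}b_{22}b_{33}(b_{41}+b_{11})(b_{22}+b_{52})\neq 0$.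
   Context: The matrix of a linear operator $T$ is taken with respect to the basis $e_1,\dots,e_5$, with the $j$-th column giving the coordinates of $T(e_j)$ (so $\overline{T(x)}=B\bar{x}$ for coordinate columns). An automorphism of an algebra $A$ is a bijective linear map $\Phi$ with $\Phi(xy)=\Phi(x)\Phi(y)$ for all $x,y$. A linear map $\Phi:A\to A$ is a local automorphism if for every $\nu\in A$ there is an automorphism $\varphi_\nu$ of $A$ (depending on $\nu$) with $\Phi(\nu)=\varphi_\nu(\nu)$. *)

(* Defs.v *)
From HB Require Import structures.
From mathcomp Require Import all_boot all_order all_algebra.
From mathcomp Require Import complex.
From mathcomp Require Import Rstruct.
Set Implicit Arguments. Unset Strict Implicit. Unset Printing Implicit Defensive.
Import Order.TTheory GRing.Theory Num.Theory.
Local Open Scope ring_scope.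

Definition C : fieldType := (Rdefinitions.R)[i].

(* Elements of pi_2 are coordinate columns w.r.t. e_1,...,e_5
   (index k : 'I_5 stands for e_(k+1)). *)
Definition basis_vec (k : 'I_5) : 'cV[C]_5 := delta_mx k 0.

Local Close Scope ring_scope.
Definition eprod (i j : 'I_5) : 'cV[C]_5 :=
  match nat_of_ord i, nat_of_ord j with
  | 0, 0 => basis_vec (inord 1)
  | 0, 1 | 1, 0 => basis_vec (inord 2)
  | 0, 3 | 3, 0 | 3, 3 => basis_vec (inord 4)
  | _, _ => 0%R
  end.

Local Open Scope ring_scope.
Definition pi2_mul (x y : 'cV[C]_5) : 'cV[C]_5 :=
  \sum_(i < 5) \sum_(j < 5) (x i 0 * y j 0) *: eprod i j.

Definition is_automorphism (A : 'M[C]_5) : Prop :=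
  A \in unitmx /\ forall x y : 'cV[C]_5, A *m pi2_mul x y = pi2_mul (A *m x) (A *m y).

Definition is_local_automorphism (B : 'M[C]_5) : Prop :=
  forall v : 'cV[C]_5, exists A : 'M[C]_5, is_automorphism A /\ B *m v = A *m v.

(* The matrix form in the theorem (rows i, columns j, 0-based). *)
Local Close Scope ring_scope.
Definition pi2_form (b11 b21 b22 b31 b32 b33 b34 b41 b51 b52 b54 : C) : 'M[C]_5 :=
  \matrix_(i < 5, j < 5)
   match nat_of_ord i, nat_of_ord j with
   | 0, 0 => b11
   | 1, 0 => b21 | 1, 1 => b22
   | 2, 0 => b31 | 2, 1 => b32 | 2, 2 => b33 | 2, 3 => b34
   | 3, 0 => b41 | 3, 3 => (b41 + b11)%R
   | 4, 0 => b51 | 4, 1 => b52 | 4, 3 => b54 | 4, 4 => (b22 + b52)%R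
   | _, _ => 0%R
   end.

(* Main.v *)
Require Import Defs.
From HB Require Import structures.
From mathcomp Require Import all_boot all_order all_algebra.
From mathcomp Require Import complex.
From mathcomp Require Import Rstruct.
From mathcomp Require Import ring.
Import GRing.Theory Num.Theory.
Local Open Scope ring_scope.

Notation i0 := (@Ordinal 5 0 isT).
Notation i1 := (@Ordinal 5 1 isT).
Notation i2 := (@Ordinal 5 2 isT).
Notation i3 := (@Ordinal 5 3 isT).
Notation i4 := (@Ordinal 5 4 isT).

Lemma sum5 (F : 'I_5 -> C) : \sum_(k<5) F k = F i0 + F i1 + F i2 + F i3 + F i4.
Proof.
rewrite !big_ord_recl big_ord0 addr0 !addrA.
by congr (F _ + F _ + F _ + F _ + F _); apply: val_inj.
Qed.

Definition pm (x y : 'cV[C]_5) (k : 'I_5) : C :=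
  match nat_of_ord k with
  | 1 => x i0 0 * y i0 0
  | 2 => x i0 0 * y i1 0 + x i1 0 * y i0 0
  | 4 => x i0 0 * y i3 0 + x i3 0 * y i0 0 + x i3 0 * y i3 0
  | _ => 0 end.

Lemma ord1E (j : 'I_1) : j = 0. Proof. by apply: val_inj; case: j => [[]]. Qed.

Lemma inordE m (k : 'I_5) : (m < 5)%N -> (k == inord m) = (nat_of_ord k == m).
Proof. by move=> H; rewrite -(inj_eq val_inj) /= inordK. Qed.

Lemma pi2_mulE x y k j : pi2_mul x y k j = pm x y k.
Proof.
rewrite (ord1E j) /pi2_mul summxE sum5 !summxE !sum5 !mxE /eprod /basis_vec /=.
rewrite !inordE // eqxx !andbT /pm.
case: k => [[|[|[|[|[|k]]]]] Hk] //=; ring.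
Qed.

Lemma ord5_cases (P : 'I_5 -> Prop) : P i0 -> P i1 -> P i2 -> P i3 -> P i4 -> forall i, P i.
Proof.
move=> ? ? ? ? ? [[|[|[|[|[|i]]]]] Hi]; last by exfalso; move: Hi; rewrite !ltnS ltn0.
all: by rewrite (bool_irrelevance Hi isT).
Qed.

Lemma mulmxE5 n (A : 'M[C]_5) (M : 'M[C]_(5, n)) k j :
  (A *m M) k j = A k i0 * M i0 j + A k i1 * M i1 j + A k i2 * M i2 j + A k i3 * M i3 j + A k i4 * M i4 j.
Proof. by rewrite mxE sum5. Qed.

Local Close Scope ring_scope.
Definition aut (a0 a1 a2 a3 a4 c2 c4 : C) : 'M[C]_5 :=
 \matrix_(i < 5, j < 5)
  match nat_of_ord i, nat_of_ord j with
  | 0,0 => a0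
  | 1,0 => a1 | 1,1 => (a0^+2)%R
  | 2,0 => a2 | 2,1 => (2*a0*a1)%R | 2,2 => (a0^+3)%R | 2,3 => c2
  | 3,0 => a3 | 3,3 => (a0+a3)%R
  | 4,0 => a4 | 4,1 => (2*a0*a3 + a3^+2)%R | 4,3 => c4 | 4,4 => ((a0+a3)^+2)%R
  | _,_ => 0%R end.
Local Open Scope ring_scope.

Lemma aut_hom a0 a1 a2 a3 a4 c2 c4 x y :
  aut a0 a1 a2 a3 a4 c2 c4 *m pi2_mul x y =
  pi2_mul (aut a0 a1 a2 a3 a4 c2 c4 *m x) (aut a0 a1 a2 a3 a4 c2 c4 *m y).
Proof.
apply/matrixP => k j.
rewrite pi2_mulE !mulmxE5 !pi2_mulE /pm !mulmxE5 !mxE /=.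
move: k; apply: ord5_cases => /=; ring.
Qed.

Definition Umx (k : C) : 'M[C]_5 :=
  \matrix_(i < 5, j < 5) ((i == j)%:R + (if (nat_of_ord i == 2%N) && (nat_of_ord j == 3%N) then k else 0)).

Lemma Umx_unit k : Umx k \in unitmx.
Proof.
have H : Umx k *m Umx (- k) = 1%:M.
  apply/matrixP; apply: ord5_cases; apply: ord5_cases;
  rewrite mulmxE5 !mxE /=; ring.
exact: (mulmx1_unit H).1.
Qed.

Lemma aut_unit a0 a1 a2 a3 a4 c2 c4 : a0 != 0 -> a0 + a3 != 0 ->
  aut a0 a1 a2 a3 a4 c2 c4 \in unitmx.
Proof.
move=> h0 hs.
have -> : aut a0 a1 a2 a3 a4 c2 c4 = aut a0 a1 a2 a3 a4 0 c4 *m Umx (c2 / a0 ^+ 3).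
  apply/matrixP; apply: ord5_cases; apply: ord5_cases;
  rewrite mulmxE5 !mxE /=; try ring.
  have e : a0^+3 * (c2 / a0^+3) = c2 by rewrite mulrC divfK ?expf_neq0.
  rewrite !add0r e; ring.
rewrite unitmx_mul Umx_unit andbT unitmxE unitfE det_trig.
  rewrite !big_ord_recl big_ord0 !mxE /=.
  by rewrite mulr1 !mulf_neq0 ?expf_neq0.
apply/is_trig_mxP => i j; move: i j; apply: ord5_cases; apply: ord5_cases => //= _; rewrite mxE //.
Qed.

Lemma hom_entry (A : 'M[C]_5) :
  (forall x y : 'cV[C]_5, A *m pi2_mul x y = pi2_mul (A *m x) (A *m y)) ->
  forall i j k, pm (col i A) (col j A) k = (A *m pi2_mul (basis_vec i) (basis_vec j)) k 0.
Proof. by move=> Hh i j k; rewrite -(pi2_mulE _ _ k 0) /basis_vec !colE Hh. Qed.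

Lemma unit_col_neq0 (A : 'M[C]_5) j : A \in unitmx -> col j A != 0.
Proof.
move=> Hu; apply/eqP => H.
have : basis_vec j = 0 by rewrite -(mulKmx Hu (basis_vec j)) /basis_vec -colE H mulmx0.
move/matrixP => /(_ j 0); rewrite !mxE !eqxx /=. by move/eqP; rewrite oner_eq0.
Qed.

Lemma pe00 : pi2_mul (basis_vec i0) (basis_vec i0) = basis_vec i1.
Proof. apply/matrixP => k j; rewrite pi2_mulE /pm (ord1E j) !mxE; move: k; apply: ord5_cases => /=; ring. Qed.
Lemma pe01 : pi2_mul (basis_vec i0) (basis_vec i1) = basis_vec i2.
Proof. apply/matrixP => k j; rewrite pi2_mulE /pm (ord1E j) !mxE; move: k; apply: ord5_cases => /=; ring. Qed.
Lemma pe31 : pi2_mul (basis_vec i3) (basis_vec i1) = 0.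
Proof. apply/matrixP => k j; rewrite pi2_mulE /pm (ord1E j) !mxE; move: k; apply: ord5_cases => /=; ring. Qed.
Lemma pe03 : pi2_mul (basis_vec i0) (basis_vec i3) = basis_vec i4.
Proof. apply/matrixP => k j; rewrite pi2_mulE /pm (ord1E j) !mxE; move: k; apply: ord5_cases => /=; ring. Qed.
Lemma pe33 : pi2_mul (basis_vec i3) (basis_vec i3) = basis_vec i4.
Proof. apply/matrixP => k j; rewrite pi2_mulE /pm (ord1E j) !mxE; move: k; apply: ord5_cases => /=; ring. Qed.

Lemma aut_form (A : 'M[C]_5) : is_automorphism A ->
  [/\ A = aut (A i0 i0) (A i1 i0) (A i2 i0) (A i3 i0) (A i4 i0) (A i2 i3) (A i4 i3),
      A i0 i0 != 0 & A i0 i0 + A i3 i0 != 0].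
Proof.
move=> [Hu Hh].
have E := hom_entry _ Hh.
have G : forall i j k, pm (col i A) (col j A) k = (A *m pi2_mul (basis_vec i) (basis_vec j)) k 0 := E.
clear E.
Ltac getE H := have := H; rewrite ?pe00 ?pe01 ?pe31 ?pe03 ?pe33 /basis_vec -?colE ?mulmx0 /pm /= !mxE.
getE (G i0 i0 i0) => f01; getE (G i0 i0 i1) => f11; getE (G i0 i0 i2) => f21;
getE (G i0 i0 i3) => f31; getE (G i0 i0 i4) => f41.
getE (G i0 i1 i0) => f02; getE (G i0 i1 i1) => f12; getE (G i0 i1 i2) => f22;
getE (G i0 i1 i3) => f32; getE (G i0 i1 i4) => f42.
getE (G i3 i1 i2) => g1.
getE (G i0 i3 i2) => g2; getE (G i3 i3 i2) => g3.
getE (G i0 i3 i4) => g4; getE (G i3 i3 i4) => g5.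
getE (G i3 i3 i0) => f04; getE (G i3 i3 i1) => f14; getE (G i3 i3 i3) => f34.
have c01 := esym f01; have c11 := esym f11; have c21 := esym f21.
have c31 := esym f31; have c41 := esym f41; have c02 := esym f02.
have c32 := esym f32; have c04 := esym f04; have c34 := esym f34.
have c12 : A i1 i2 = 0 by rewrite -f12 c01; ring.
have c22 : A i2 i2 = A i0 i0 ^+ 3 by rewrite -f22 c11 c01; ring.
have c42 : A i4 i2 = 0 by rewrite -f42 c31 c01; ring.
have h00 : A i0 i0 != 0.
{ apply/negP => /eqP z.
  have := unit_col_neq0 _ i2 Hu; apply/negP; rewrite negbK; apply/eqP/matrixP => k j.
  rewrite (ord1E j) !mxE; move: k; apply: ord5_cases.
  all: rewrite ?c02 ?c12 ?c22 ?c32 ?c42 ?z ?exprS ?mul0r; reflexivity. }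
have c03 : A i0 i3 = 0.
  have : A i0 i3 * A i0 i0 ^+ 2 = 0 by rewrite -g1 c11 c01; ring.
  by move/eqP; rewrite mulf_eq0 expf_eq0 (negbTE h00) andbF orbF => /eqP.
have c13 : A i1 i3 = 0.
  have : A i0 i0 * A i1 i3 = 0.
    transitivity (A i0 i0 * A i1 i3 + A i1 i0 * A i0 i3); first by rewrite c03; ring.
    by rewrite g2 -g3 c03; ring.
  by move/eqP; rewrite mulf_eq0 (negbTE h00) /= => /eqP.
have c14 : A i1 i4 = 0 by rewrite -f14 c03; ring.
have c24 : A i2 i4 = 0 by rewrite -g3 c03; ring.
have c44' : A i4 i4 = A i3 i3 ^+ 2 by rewrite -g5 c03; ring.
have h33 : A i3 i3 != 0.
{ apply/negP => /eqP z.
  have := unit_col_neq0 _ i4 Hu; apply/negP; rewrite negbK; apply/eqP/matrixP => k j.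
  rewrite (ord1E j) !mxE; move: k; apply: ord5_cases.
  all: rewrite ?c04 ?c14 ?c24 ?c34 ?c44' ?z ?exprS ?mul0r; reflexivity. }
have c33 : A i3 i3 = A i0 i0 + A i3 i0.
  have : (A i0 i0 + A i3 i0 - A i3 i3) * A i3 i3 = 0.
    transitivity ((A i0 i0 * A i3 i3 + A i3 i0 * A i0 i3 + A i3 i0 * A i3 i3) -
       (A i0 i3 * A i3 i3 + A i3 i3 * A i0 i3 + A i3 i3 * A i3 i3)); first by rewrite c03; ring.
    by rewrite g4 g5 subrr.
  by move/eqP; rewrite mulf_eq0 (negbTE h33) orbF subr_eq0 => /eqP.
have c44 : A i4 i4 = (A i0 i0 + A i3 i0) ^+ 2 by rewrite c44' c33.
split => //; last by rewrite -c33.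
apply/matrixP; apply: ord5_cases; apply: ord5_cases; rewrite mxE /=.
all: rewrite ?c01 ?c11 ?c21 ?c31 ?c41 ?c02 ?c12 ?c22 ?c32 ?c42 ?c03 ?c13 ?c33 ?c04 ?c14 ?c24 ?c34 ?c44; ring.
Qed.

Lemma loc_vec (B : 'M[C]_5) (v : 'cV[C]_5) : is_local_automorphism B ->
  exists a0 a1 a2 a3 a4 c2 c4, [/\ a0 != 0, a0 + a3 != 0 &
     B *m v = aut a0 a1 a2 a3 a4 c2 c4 *m v].
Proof.
move=> H; have [A [HA e]] := H v; have [eA h0 hs] := aut_form A HA.
exists (A i0 i0), (A i1 i0), (A i2 i0), (A i3 i0), (A i4 i0), (A i2 i3), (A i4 i3).
by split => //; rewrite -eA.
Qed.

Lemma loc_col (B : 'M[C]_5) j : is_local_automorphism B ->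
  exists a0 a1 a2 a3 a4 c2 c4, [/\ a0 != 0, a0 + a3 != 0 &
     col j B = col j (aut a0 a1 a2 a3 a4 c2 c4)].
Proof.
move=> H; have [a0 [a1 [a2 [a3 [a4 [c2 [c4 [h0 hs e]]]]]]]] := loc_vec B (basis_vec j) H.
by exists a0, a1, a2, a3, a4, c2, c4; split => //; rewrite !colE.
Qed.

Lemma lin2 (x y l r l' r' u w : C) : l = r -> l' = r' -> x - y = u * (l - r) + w * (l' - r') -> x = y.
Proof. by move=> -> -> /eqP; rewrite !subrr !mulr0 addr0 subr_eq0 => /eqP. Qed.

Definition vec2 (p q : nat) : 'cV[C]_5 :=
  \col_k (if nat_of_ord k == p then 1 else if nat_of_ord k == q then -1 else 0).

Lemma forward (B : 'M[C]_5) : is_local_automorphism B ->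
  exists b11 b21 b22 b31 b32 b33 b34 b41 b51 b52 b54 : C,
    b11 * b22 * b33 * (b41 + b11) * (b22 + b52) != 0 /\
    B = pi2_form b11 b21 b22 b31 b32 b33 b34 b41 b51 b52 b54.
Proof.
move=> H.
have [a0 [a1 [a2 [a3 [a4 [c2 [c4 [h0 hs e]]]]]]]] := loc_col B i0 H.
have n00 : B i0 i0 != 0 by have := congr1 (fun M : 'cV[C]_5 => M i0 0) e; rewrite !mxE => ->.
clear a0 a1 a2 a3 a4 c2 c4 h0 hs e.
have [a0 [a1 [a2 [a3 [a4 [c2 [c4 [h0 hs e]]]]]]]] := loc_col B i1 H.
have d01 : B i0 i1 = 0 by have := congr1 (fun M : 'cV[C]_5 => M i0 0) e; rewrite !mxE => ->.
have d31 : B i3 i1 = 0 by have := congr1 (fun M : 'cV[C]_5 => M i3 0) e; rewrite !mxE => ->.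
have n11 : B i1 i1 != 0 by have := congr1 (fun M : 'cV[C]_5 => M i1 0) e; rewrite !mxE => ->; rewrite expf_neq0.
clear a0 a1 a2 a3 a4 c2 c4 h0 hs e.
have [a0 [a1 [a2 [a3 [a4 [c2 [c4 [h0 hs e]]]]]]]] := loc_col B i2 H.
have d02 : B i0 i2 = 0 by have := congr1 (fun M : 'cV[C]_5 => M i0 0) e; rewrite !mxE => ->.
have d12 : B i1 i2 = 0 by have := congr1 (fun M : 'cV[C]_5 => M i1 0) e; rewrite !mxE => ->.
have d32 : B i3 i2 = 0 by have := congr1 (fun M : 'cV[C]_5 => M i3 0) e; rewrite !mxE => ->.
have d42 : B i4 i2 = 0 by have := congr1 (fun M : 'cV[C]_5 => M i4 0) e; rewrite !mxE => ->.
have n22 : B i2 i2 != 0 by have := congr1 (fun M : 'cV[C]_5 => M i2 0) e; rewrite !mxE => ->; rewrite expf_neq0.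
clear a0 a1 a2 a3 a4 c2 c4 h0 hs e.
have [a0 [a1 [a2 [a3 [a4 [c2 [c4 [h0 hs e]]]]]]]] := loc_col B i3 H.
have d03 : B i0 i3 = 0 by have := congr1 (fun M : 'cV[C]_5 => M i0 0) e; rewrite !mxE => ->.
have d13 : B i1 i3 = 0 by have := congr1 (fun M : 'cV[C]_5 => M i1 0) e; rewrite !mxE => ->.
have n33 : B i3 i3 != 0 by have := congr1 (fun M : 'cV[C]_5 => M i3 0) e; rewrite !mxE => ->.
clear a0 a1 a2 a3 a4 c2 c4 h0 hs e.
have [a0 [a1 [a2 [a3 [a4 [c2 [c4 [h0 hs e]]]]]]]] := loc_col B i4 H.
have d04 : B i0 i4 = 0 by have := congr1 (fun M : 'cV[C]_5 => M i0 0) e; rewrite !mxE => ->.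
have d14 : B i1 i4 = 0 by have := congr1 (fun M : 'cV[C]_5 => M i1 0) e; rewrite !mxE => ->.
have d24 : B i2 i4 = 0 by have := congr1 (fun M : 'cV[C]_5 => M i2 0) e; rewrite !mxE => ->.
have d34 : B i3 i4 = 0 by have := congr1 (fun M : 'cV[C]_5 => M i3 0) e; rewrite !mxE => ->.
have n44 : B i4 i4 != 0 by have := congr1 (fun M : 'cV[C]_5 => M i4 0) e; rewrite !mxE => ->; rewrite expf_neq0.
clear a0 a1 a2 a3 a4 c2 c4 h0 hs e.
have [a0 [a1 [a2 [a3 [a4 [c2 [c4 [h0 hs e]]]]]]]] := loc_vec B (vec2 0 3) H.
have r33 : B i3 i3 = B i3 i0 + B i0 i0.
  have e0 := congr1 (fun M : 'cV[C]_5 => M i0 0) e; have e3 := congr1 (fun M : 'cV[C]_5 => M i3 0) e.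
  move: e0 e3; rewrite !mulmxE5 !mxE /=; rewrite d03 => e0 e3.
  apply: (lin2 _ _ _ _ _ _ (-1) (-1) e3 e0); ring.
clear a0 a1 a2 a3 a4 c2 c4 h0 hs e.
have [a0 [a1 [a2 [a3 [a4 [c2 [c4 [h0 hs e]]]]]]]] := loc_vec B (vec2 1 4) H.
have r44 : B i4 i4 = B i1 i1 + B i4 i1.
  have e1 := congr1 (fun M : 'cV[C]_5 => M i1 0) e; have e4 := congr1 (fun M : 'cV[C]_5 => M i4 0) e.
  move: e1 e4; rewrite !mulmxE5 !mxE /=; rewrite d14 => e1 e4.
  apply: (lin2 _ _ _ _ _ _ (-1) (-1) e4 e1); ring.
clear a0 a1 a2 a3 a4 c2 c4 h0 hs e.
exists (B i0 i0), (B i1 i0), (B i1 i1), (B i2 i0), (B i2 i1), (B i2 i2), (B i2 i3),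
  (B i3 i0), (B i4 i0), (B i4 i1), (B i4 i3).
split.
  by rewrite -r33 -r44 !mulf_neq0.
apply/matrixP; apply: ord5_cases; apply: ord5_cases; rewrite !mxE; cbv beta iota delta [nat_of_ord].
all: rewrite ?d01 ?d31 ?d02 ?d12 ?d32 ?d42 ?d03 ?d13 ?d04 ?d14 ?d24 ?d34 ?r33 ?r44; reflexivity.
Qed.

Lemma root_ex (x : C) n : (0 < n)%N -> exists r : C, r ^+ n = x.
Proof. move=> n0. exists (@nthroot (Rdefinitions.R[i]) n x). exact: (@rootCK (Rdefinitions.R[i]) n n0 x). Qed.

Lemma root_neq0 (r b : C) n : (0 < n)%N -> r ^+ n = b -> b != 0 -> r != 0.
Proof. by move=> n0 <-; rewrite expf_eq0 n0. Qed.

Lemma mk_loc (B : 'M[C]_5) (v : 'cV[C]_5) a0 a1 a2 a3 a4 c2 c4 :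
  a0 != 0 -> a0 + a3 != 0 -> B *m v = aut a0 a1 a2 a3 a4 c2 c4 *m v ->
  exists A, is_automorphism A /\ B *m v = A *m v.
Proof.
move=> h0 hs e; exists (aut a0 a1 a2 a3 a4 c2 c4); split => //; split.
  exact: aut_unit.
exact: aut_hom.
Qed.

Lemma colP5 (x y : 'cV[C]_5) : (forall k, x k 0 = y k 0) -> x = y.
Proof. by move=> H; apply/matrixP => k j; rewrite (ord1E j). Qed.

Ltac solve_eq h := apply: colP5; apply: ord5_cases; rewrite !mulmxE5 !mxE;
  cbv beta iota delta [nat_of_ord]; rewrite ?h; first [ring | (field; repeat (apply/andP; split); done)].

Ltac solve_eq2 h h' := apply: colP5; apply: ord5_cases; rewrite !mulmxE5 !mxE;
  cbv beta iota delta [nat_of_ord]; rewrite ?h ?h'; first [ring | (field; repeat (apply/andP; split); done)].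
Ltac solve_eq3 h h' h'' := apply: colP5; apply: ord5_cases; rewrite !mulmxE5 !mxE;
  cbv beta iota delta [nat_of_ord]; rewrite ?h ?h' ?h''; first [ring | (field; repeat (apply/andP; split); done)].

Lemma backward (b11 b21 b22 b31 b32 b33 b34 b41 b51 b52 b54 : C) :
  b11 * b22 * b33 * (b41 + b11) * (b22 + b52) != 0 ->
  is_local_automorphism (pi2_form b11 b21 b22 b31 b32 b33 b34 b41 b51 b52 b54).
Proof.
rewrite !mulf_eq0 !negb_or => /andP [/andP [/andP [/andP [n11 n22] n33] n41] n52] v.
have [h0|h0] := eqVneq (v i0 0) 0; last first.
  apply: (mk_loc _ _ b11 ((b21*(v i0 0) + b22*(v i1 0) - b11^+2*(v i1 0))/(v i0 0))
     ((b31*(v i0 0) + b32*(v i1 0) + b33*(v i2 0) + b34*(v i3 0) - 2*b11*((b21*(v i0 0) + b22*(v i1 0) - b11^+2*(v i1 0))/(v i0 0))*(v i1 0) - b11^+3*(v i2 0))/(v i0 0))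
     b41
     ((b51*(v i0 0) + b52*(v i1 0) + b54*(v i3 0) + (b22+b52)*(v i4 0) - (2*b11*b41 + b41^+2)*(v i1 0) - (b11+b41)^+2*(v i4 0))/(v i0 0))
     0 0) => //.
    by rewrite addrC.
  solve_eq h0.
have [h1|h1] := eqVneq (v i1 0) 0; last first.
  have [r hr] := root_ex b22 2 isT.
  have nr : r != 0 by apply: (root_neq0 _ _ 2 isT hr).
  subst b22.
  have [h3|h3] := eqVneq (v i3 0) 0; last first.
    apply: (mk_loc _ _ r ((b32*(v i1 0) + b33*(v i2 0) + b34*(v i3 0) - r^+3*(v i2 0))/(2*r*(v i1 0))) 0 (b11 + b41 - r) 0 0
      ((b52*(v i1 0) + b54*(v i3 0) + (r^+2+b52)*(v i4 0) - (2*r*(b11+b41-r) + (b11+b41-r)^+2)*(v i1 0) - (b11+b41)^+2*(v i4 0))/(v i3 0))) => //.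
      by rewrite (_ : r + _ = b41 + b11) //; ring.
    solve_eq2 h0 h3.
  have [t ht] := root_ex (r^+2 + b52) 2 isT.
  have nt : t != 0 by apply: (root_neq0 _ _ 2 isT ht).
  have eb : b52 = t^+2 - r^+2 by rewrite ht; ring.
  subst b52.
  apply: (mk_loc _ _ r ((b32*(v i1 0) + b33*(v i2 0) - r^+3*(v i2 0))/(2*r*(v i1 0))) 0 (t - r) 0 0 0) => //.
    by rewrite (_ : r + _ = t) //; ring.
  solve_eq2 h0 h3.
have [h3|h3] := eqVneq (v i3 0) 0; last first.
  apply: (mk_loc _ _ 1 0 0 (b11 + b41 - 1) 0
     ((b33*(v i2 0) + b34*(v i3 0) - (v i2 0))/(v i3 0))
     ((b54*(v i3 0) + (b22+b52)*(v i4 0) - (b11+b41)^+2*(v i4 0))/(v i3 0))).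
  - exact: oner_neq0.
  - by rewrite (_ : 1 + _ = b41 + b11) //; ring.
  solve_eq2 h0 h1.
have [r hr] := root_ex b33 3 isT.
have nr : r != 0 by apply: (root_neq0 _ _ 3 isT hr).
subst b33.
have [t ht] := root_ex (b22 + b52) 2 isT.
have nt : t != 0 by apply: (root_neq0 _ _ 2 isT ht).
have eb : b52 = t^+2 - b22 by rewrite ht; ring.
subst b52.
apply: (mk_loc _ _ r 0 0 (t - r) 0 0 0) => //.
  by rewrite (_ : r + _ = t) //; ring.
solve_eq3 h0 h1 h3.
Qed.

Theorem theorem3p2 (B : 'M[C]_5) :
  is_local_automorphism B <->
  exists b11 b21 b22 b31 b32 b33 b34 b41 b51 b52 b54 : C,
    b11 * b22 * b33 * (b41 + b11) * (b22 + b52) != 0 /\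
    B = pi2_form b11 b21 b22 b31 b32 b33 b34 b41 b51 b52 b54.
Proof.
split; first exact: forward.
move=> [b11 [b21 [b22 [b31 [b32 [b33 [b34 [b41 [b51 [b52 [b54 [nz ->]]]]]]]]]]]].
exact: backward.
Qed.
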